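(* Let $a\ge a_0$. If $(DFE_a)$ admits a solution on $\mathbf V$, then there is a cycle $\xi$ in $\mathbf X$ with $\sigma_a(\xi)=0$.
   Context: Network $\Gamma$ with finite arcs $\mathcal E$ closed under inversion, vertices $\mathbf V$, connected; Hamiltonians $H_\gamma$ continuous, coercive, quasiconvex with $\mathrm{Int}\{H_\gamma(s,\cdot)\le b\}=\{H_\gamma(s,\cdot)<b\}$, $H_{\tilde\gamma}(s,p)=H_\gamma(1-s,-p)$; $a_0$ = max of $\max_s\min_pH_\gamma$ over non-closed arcs and of $c_\gamma$ (least level admitting a periodic viscosity subsolution) over closed arcs. Graph $\mathbf X=(\mathbf V,\mathbf E)$, bijection $\Psi:\mathbf E\to\mathcal E$, $\mathrm o(e)=\Psi(e)(0)$, $\mathrm t(e)=\Psi(e)(1)$, $-e=\Psi^{-1}(\widetilde{\Psi(e)})$, $\mathbf E_x=\{e:\mathrm o(e)=x\}$, $\sigma_a(e)=\int_0^1\max\{p:H_{\Psi(e)}(t,p)=a\}dt$. Cycle: $\xi=(e_1,\dots,e_M)$, $M\ge1$, $\mathrm t(e_j)=\mathrm o(e_{j+1})$, $\mathrm t(e_M)=\mathrm o(e_1)$; $\sigma_a(\xi)=\sum\sigma_a(e_i)$. $(DFE_a)$: $u(x)=\min_{e\in\mathbf E_x}(u(\mathrm t(e))+\sigma_a(-e))$ for all $x\in\mathbf V$. *)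

(* Defs.v *)
From mathcomp Require Import all_boot.
From Stdlib Require Import Reals ClassicalEpsilon.
Set Implicit Arguments. Unset Strict Implicit. Unset Printing Implicit Defensive.
Open Scope R_scope.

Definition IsMaxR (P : R -> Prop) (m : R) : Prop := P m /\ forall x, P x -> x <= m.
Definition IsMinR (P : R -> Prop) (m : R) : Prop := P m /\ forall x, P x -> m <= x.

Definition in01 (s : R) : Prop := 0 <= s <= 1.

Definition ham_continuous (H : R -> R -> R) : Prop :=
  forall s p, in01 s -> forall eps, 0 < eps -> exists delta, 0 < delta /\
    forall s' p', in01 s' -> Rabs (s' - s) < delta -> Rabs (p' - p) < delta ->
      Rabs (H s' p' - H s p) < eps.

Definition ham_coercive (H : R -> R -> R) : Prop :=
  forall M, exists R0, forall s p, in01 s -> R0 < Rabs p -> M < H s p.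

Definition ham_quasiconvex (H : R -> R -> R) : Prop :=
  forall s p q l, in01 s -> 0 <= l <= 1 ->
    H s (l * p + (1 - l) * q) <= Rmax (H s p) (H s q).

(* Int {H(s,.) <= b} = {H(s,.) < b} *)
Definition ham_int_cond (H : R -> R -> R) : Prop :=
  forall s b p, in01 s ->
    ((exists delta, 0 < delta /\ forall q, Rabs (q - p) < delta -> H s q <= b)
     <-> H s p < b).

Definition C1 (phi : R -> R) : Prop :=
  exists dphi : R -> R, (forall x, derivable_pt_lim phi x (dphi x)) /\ continuity dphi.

Definition visc_subsol (H : R -> R -> R) (c : R) (u : R -> R) : Prop :=
  forall s, 0 < s < 1 ->
  forall phi dphi, (forall x, derivable_pt_lim phi x (dphi x)) -> continuity dphi ->
    (exists r, 0 < r /\ forall y, 0 < y < 1 -> Rabs (y - s) < r ->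
        u y - phi y <= u s - phi s) ->
    H s (dphi s) <= c.

Definition u_continuous01 (u : R -> R) : Prop :=
  forall s, in01 s -> forall eps, 0 < eps -> exists delta, 0 < delta /\
    forall s', in01 s' -> Rabs (s' - s) < delta -> Rabs (u s' - u s) < eps.

Definition admits_periodic_subsol (H : R -> R -> R) (c : R) : Prop :=
  exists u : R -> R, u_continuous01 u /\ u 0 = u 1 /\ visc_subsol H c u.

Definition is_crit_value (H : R -> R -> R) (c : R) : Prop :=
  IsMinR (admits_periodic_subsol H) c.

Definition is_maxmin (H : R -> R -> R) (v : R) : Prop :=
  IsMaxR (fun w => exists s, in01 s /\ IsMinR (fun z => exists p, z = H s p) w) v.

(* max { p : H(t,p) = a } (chosen by Hilbert's epsilon; it exists for a >= a_0) *)
Definition maxp (H : R -> R -> R) (a t : R) : R :=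
  epsilon (inhabits 0) (fun m => IsMaxR (fun p => H t p = a) m).

(* Riemann integral over [0,1] (the value does not depend on the proof of
   integrability; 0 is a junk value for non-integrable functions) *)
Definition int01 (f : R -> R) : R :=
  epsilon (inhabits 0) (fun v => exists pr : Riemann_integrable f 0 1, RiemannInt pr = v).

Definition sigma_arc (H : R -> R -> R) (a : R) : R := int01 (fun t => maxp H a t).

Definition sigma_seq (E : Type) (sig : E -> R) (xi : seq E) : R :=
  \big[Rplus/0]_(e <- xi) sig e.

Definition is_graph_cycle (V E : finType) (org tgt : E -> V) (xi : seq E) : Prop :=
  leq 1 (size xi) /\ cycle (fun e f => tgt e == org f) xi.

Definition adj (V E : finType) (org tgt : E -> V) : rel V :=
  fun x y => [exists e, (org e == x) && (tgt e == y)].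

Definition DFE (V E : finType) (org tgt : E -> V) (rev : E -> E) (sig : E -> R)
  (u : V -> R) : Prop :=
  forall x, IsMinR (fun v => exists e, org e = x /\ v = u (tgt e) + sig (rev e)) (u x).

(* Main.v *)
Require Import Defs.
From mathcomp Require Import all_boot.
From Stdlib Require Import Reals ClassicalEpsilon Classical Lra.
Open Scope R_scope.

Lemma ss_rcons (E : Type) (sig : E -> R) s x :
  sigma_seq sig (rcons s x) = sigma_seq sig s + sig x.
Proof.
rewrite /sigma_seq; elim: s => [|y s IH] /=; first by rewrite !big_cons !big_nil; lra.
rewrite !big_cons IH; lra.
Qed.

Lemma ss_rev (E : Type) (sig : E -> R) s :
  sigma_seq sig (rev s) = sigma_seq sig s.
Proof.
elim: s => [|y s IH]; first by [].
rewrite rev_cons ss_rcons IH /sigma_seq big_cons; lra.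
Qed.

Lemma path_iota (E : Type) (Rl : E -> E -> bool) (h : nat -> E) (z : E) :
  (forall k, Rl (h k) (h k.+1)) ->
  forall m i, Rl (h (i + m)%nat) z ->
  path Rl (h i) (rcons (map h (iota i.+1 m)) z).
Proof.
move=> Hs; elim=> [|m IH] i Hz /=; first by rewrite addn0 in Hz; rewrite Hz.
rewrite Hs /=; apply: IH; by rewrite addSnnS.
Qed.

Theorem proposition6p17
  (V E : finType) (org tgt : E -> V) (rev : E -> E)
  (H : E -> R -> R -> R)
  (* the graph X: inversion of arcs *)
  (Hrev_inv : forall e, rev (rev e) = e)
  (Hrev_neq : forall e, rev e <> e)
  (Hrev_org : forall e, org (rev e) = tgt e)
  (* every vertex is an endpoint of an arc, and the network is connected *)
  (Hvert : forall x, exists e, org e = x)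
  (Hconn : forall x y, connect (adj org tgt) x y)
  (* the Hamiltonians *)
  (Hcont : forall e, ham_continuous (H e))
  (Hcoer : forall e, ham_coercive (H e))
  (Hqc : forall e, ham_quasiconvex (H e))
  (Hint : forall e, ham_int_cond (H e))
  (Hsym : forall e s p, in01 s -> H (rev e) s p = H e (1 - s) (- p))
  (* a_0 *)
  (a0 : R)
  (Ha0 : IsMaxR (fun v => exists e,
            (org e <> tgt e /\ is_maxmin (H e) v) \/
            (org e = tgt e /\ is_crit_value (H e) v)) a0)
  (a : R) (Ha : a0 <= a)
  (u : V -> R)
  (Hu : DFE org tgt rev (fun e => sigma_arc (H e) a) u) :
  exists xi : seq E, is_graph_cycle org tgt xi /\
    sigma_seq (fun e => sigma_arc (H e) a) xi = 0.
Proof.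
set sig := (fun e => sigma_arc (H e) a).
have Hg : forall x, {e | org e = x /\ u x = u (tgt e) + sig (rev e)}.
  move=> x; apply: constructive_indefinite_description.
  case: (Hu x) => [[e [He1 He2]] _]; exists e; split => //.
pose g x := proj1_sig (Hg x).
pose f x := tgt (g x).
have Hgo : forall x, org (g x) = x by move=> x; case: (proj2_sig (Hg x)).
have Hgu : forall x, u x = u (f x) + sig (rev (g x)) by move=> x; case: (proj2_sig (Hg x)).
have Htr : forall e, tgt (rev e) = org e.
  by move=> e; rewrite -[in RHS](Hrev_inv e) Hrev_org.
case: Ha0 => [[e0 _] _]; pose x0 := org e0.
have [i [j [Hij Heq]]] : exists i j, (i < j)%nat /\ iter i f x0 = iter j f x0.
  apply: NNPP => Hn.
  have Hinj : injective (fun k : 'I_(#|V|.+1) => iter k f x0).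
    move=> k1 k2 Hk; apply/val_inj => /=.
    case: (ltngtP k1 k2) => // Hlt; exfalso; apply: Hn.
      by exists k1, k2.
    by exists k2, k1.
  by have := leq_card _ Hinj; rewrite card_ord ltnn.
pose y := iter i f x0; pose n := (j - i)%nat.
have Hn0 : (0 < n)%nat by rewrite subn_gt0.
have Hy : iter n f y = y by rewrite /y -iterD subnK ?Heq // ltnW.
pose h k := rev (g (iter k f y)).
exists (seq.rev (map h (iota 0 n))); split.
  split; first by rewrite size_rev size_map size_iota.
  rewrite rev_cycle.
  move: Hn0 Hy; case: n => // m _ Hy /=.
  apply: (@path_iota E (fun x y0 => tgt y0 == org x) h (h 0%nat) _ m 0%nat).
    by move=> k; rewrite /h Htr Hrev_org Hgo iterS.
  rewrite /h Htr Hrev_org Hgo add0n -[tgt _]/(f _) -iterS Hy /=; exact: eqxx.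
rewrite ss_rev.
have Tel : forall m k, sigma_seq sig (map h (iota k m)) = u (iter k f y) - u (iter (k + m) f y).
  elim=> [|m IH] k /=; first by rewrite /sigma_seq big_nil addn0; lra.
  rewrite /sigma_seq big_cons -/(sigma_seq sig _) IH addSnnS (Hgu (iter k f y)) /h -iterS; lra.
by rewrite Tel add0n Hy /=; lra.
Qed.
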